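(* Let $r\ge1$, let $H$ be a multi-hypergraph in which every hyperedge has size at most $r$, let $\mathcal{M}$ be a matroid and $\gamma\colon E(H)\to E(\mathcal{M})$. If $(H,\gamma)$ contains a maximal independent matching of size $\ell\ge 0$, then there exist an integer $a$ with $0\le a\le \ell$ and a set $U\subseteq V(H)$ with $|U|\le (2r-1)a$ such that $H-U$ contains an independent matching of size $\ell-a$ whose labels form a basis of $\mathrm{span}(\gamma(E(H-U)))$.
   Context: A multi-hypergraph $H=(V,E)$ consists of a finite set $V$ and a multiset $E$ of non-empty subsets of $V$; distinct copies of the same subset are distinct hyperedges and may receive different labels. For $U\subseteq V(H)$, $H-U$ has vertex set $V(H)\setminus U$ and all hyperedges disjoint from $U$. $\mathrm{span}$ denotes the closure operator of $\mathcal{M}$; a basis of a flat $S$ is a maximal independent subset of $S$. An independent matching in $(H,\gamma)$ is a collection $M$ of pairwise vertex-disjoint hyperedges with pairwise distinct labels such that $\gamma(M)$ is independent in $\mathcal{M}$ (the empty collection qualifies). It is inclusion-wise maximal if no independent matching strictly contains it, and maximal if there is no independent matching $M'$ with $\mathrm{span}(\gamma(M'))=\mathrm{span}(\gamma(M))$ that is not inclusion-wise maximal. *)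

(* Defs.v *)
From mathcomp Require Import all_boot.
Set Implicit Arguments. Unset Strict Implicit. Unset Printing Implicit Defensive.

Section Matroid.
Variable T : finType.
Variable indep : {set T} -> bool.

Definition is_matroid : Prop :=
  [/\ indep set0,
      (forall A B : {set T}, A \subset B -> indep B -> indep A) &
      (forall A B : {set T}, indep A -> indep B -> #|A| < #|B| ->
         exists2 x, x \in B :\: A & indep (x |: A))].

Definition mrank (X : {set T}) : nat :=
  \max_(I in powerset X | indep I) #|I|.

Definition span (X : {set T}) : {set T} :=
  [set e | mrank (e |: X) == mrank X].

Definition basis_of (S B : {set T}) : Prop :=
  [/\ B \subset S, indep B &
      forall B' : {set T}, B \subset B' -> B' \subset S -> indep B' -> B' = B].
End Matroid.

(* ---------- Labelled multi-hypergraphs ----------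
   A multi-hypergraph H = (V, E): V a finType of vertices, E a finType indexing
   the hyperedges (so repeated subsets are distinct hyperedges), and
   edge : E -> {set V} giving the vertex set of each hyperedge.
   gamma : E -> T labels hyperedges by matroid elements. *)
Section Hyper.
Variables (V E T : finType) (edge : E -> {set V}) (gamma : E -> T)
          (indep : {set T} -> bool).

Definition edges_minus (U : {set V}) : {set E} :=
  [set e | [disjoint edge e & U]].

Definition indep_matching (M : {set E}) : Prop :=
  [/\ (forall e f, e \in M -> f \in M -> e != f -> [disjoint edge e & edge f]),
      {in M &, injective gamma} &
      indep (gamma @: M)].

Definition indep_matching_in (U : {set V}) (M : {set E}) : Prop :=
  M \subset edges_minus U /\ indep_matching M.

Definition incl_maximal (M : {set E}) : Prop :=
  indep_matching M /\ ~ (exists M' : {set E}, M \proper M' /\ indep_matching M').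

Definition maximal_matching (M : {set E}) : Prop :=
  indep_matching M /\
  ~ (exists M' : {set E}, [/\ indep_matching M',
                    span indep (gamma @: M') = span indep (gamma @: M) &
                    ~ incl_maximal M']).
End Hyper.

(* Main.v *)
Require Import Defs.
From mathcomp Require Import all_boot zify.
From Stdlib Require Import Classical.
Set Implicit Arguments. Unset Strict Implicit. Unset Printing Implicit Defensive.

Lemma disjP (T : finType) (A B : {set T}) :
  [disjoint A & B] <-> (forall x, x \in A -> x \in B -> False).
Proof.
rewrite -setI_eq0; split.
  move/eqP => H x xa xb. have : x \in A :&: B by rewrite inE xa.
  by rewrite H inE.
move=> H; apply/eqP/setP=> x; rewrite !inE; apply/negbTE/negP => /andP[].
exact: H.
Qed.

Lemma min_ex (P : nat -> Prop) : (exists k, P k) -> exists k, P k /\ forall j, P j -> k <= j.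
Proof.
move=> [k Pk]; elim: k {-2}k (leqnn k) Pk => [|n IH] k hk Pk.
  exists k; split => // j _; by move: hk; rewrite leqn0 => /eqP->.
case: (classic (exists j, j < k /\ P j)) => [[j [hj Pj]]|H].
  apply: (IH j) => //; lia.
exists k; split => // j Pj; rewrite leqNgt; apply/negP => hj; apply: H; by exists j.
Qed.

Section Mat.
Variable T : finType.
Variable indep : {set T} -> bool.
Hypothesis hM : is_matroid indep.
Local Notation rk := (mrank indep).
Local Notation sp := (span indep).

Lemma indep0 : indep set0. Proof. by case: hM. Qed.
Lemma indep_sub (A B : {set T}) : A \subset B -> indep B -> indep A. Proof. case: hM => _ h _; exact: h. Qed.
Lemma augment (A B : {set T}) : indep A -> indep B -> #|A| < #|B| -> exists2 x, x \in B :\: A & indep (x |: A).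
Proof. case: hM => _ _ h; exact: h. Qed.

Lemma rk_ge (I X : {set T}) : I \subset X -> indep I -> #|I| <= rk X.
Proof.
move=> IX hI; rewrite /mrank.
apply: (@leq_bigmax_cond _ (fun I => (I \in powerset X) && indep I)).
by rewrite powersetE IX hI.
Qed.

Lemma rk_wit (X : {set T}) : exists I : {set T}, [/\ I \subset X, indep I & #|I| = rk X].
Proof.
rewrite /mrank.
have : 0 < #|[pred I : {set T} | (I \in powerset X) && indep I]|.
  apply/card_gt0P; exists set0; by rewrite inE powersetE sub0set indep0.
move=> /(eq_bigmax_cond (fun I : {set T} => #|I|)) [I0].
rewrite inE powersetE => /andP[h1 h2] h3.
exists I0; split => //.
Qed.

Lemma rk_le (X : {set T}) : rk X <= #|X|.
Proof. have [I [h1 _ <-]] := rk_wit X. exact: subset_leq_card. Qed.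

Lemma rk_indep (X : {set T}) : indep X -> rk X = #|X|.
Proof. move=> h; apply/eqP; rewrite eqn_leq rk_le; exact: rk_ge. Qed.

Lemma indep_rk (X : {set T}) : #|X| <= rk X -> indep X.
Proof.
have [I [h1 h2 h3]] := rk_wit X => h.
have : I == X by rewrite eqEcard h1 h3.
by move/eqP <-.
Qed.

Lemma rk_mono (X Y : {set T}) : X \subset Y -> rk X <= rk Y.
Proof.
move=> XY; have [I [h1 h2 <-]] := rk_wit X; apply: rk_ge => //.
exact: subset_trans XY.
Qed.

Lemma extend (A X : {set T}) : indep A -> A \subset X ->
  exists B : {set T}, [/\ A \subset B, B \subset X, indep B & #|B| = rk X].
Proof.
move: {2}(rk X - #|A|) (erefl (rk X - #|A|)) => n; elim: n A => [|n IH] A hn hA AX.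
  exists A; split => //; apply/eqP; rewrite eqn_leq rk_ge //; apply/andP; split => //; lia.
have [I [h1 h2 h3]] := rk_wit X.
have [|y] := augment hA h2; first by lia.
rewrite inE => /andP[yA yI] hy.
have yX : y \in X by apply: (subsetP h1).
have [|||B [b1 b2 b3 b4]] := IH (y |: A).
- rewrite cardsU1 yA; lia.
- done.
- by rewrite subUset sub1set yX AX.
exists B; split => //. exact: subset_trans (subsetUr _ _) b1.
Qed.

Lemma span_sub (X : {set T}) : X \subset sp X.
Proof. apply/subsetP => x xX; by rewrite inE (setUidPr _) // sub1set. Qed.

Lemma indep_span (X : {set T}) x : indep X -> x \notin sp X -> indep (x |: X).
Proof.
move=> hX; rewrite inE => hx.
have : rk X < rk (x |: X) by rewrite ltn_neqAle eq_sym hx (rk_mono (subsetUr _ _)).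
have [I [h1 h2 <-]] := rk_wit (x |: X); rewrite rk_indep // => lt.
have [y] := augment hX h2 lt; rewrite inE => /andP[yX yI].
have := subsetP h1 _ yI; rewrite !inE (negbTE yX) orbF => /eqP e; by rewrite -e.
Qed.

Lemma span_mono (X Y : {set T}) : X \subset Y -> sp X \subset sp Y.
Proof.
move=> XY; apply/subsetP => x; rewrite !inE => /eqP hx.
have [A [a1 a2 a3]] := rk_wit X.
have [B [b1 b2 b3 b4]] := extend a2 (subset_trans a1 XY).
rewrite eqn_leq (rk_mono (subsetUr _ _)) andbT leqNgt; apply/negP => lt.
have [I [h1 h2 h3]] := rk_wit (x |: Y).
have [|y] := augment b3 h2; first by lia.
rewrite inE => /andP[yB yI] hy.
have := subsetP h1 _ yI; rewrite !inE => /orP[/eqP eyx|yY].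
- subst y.
  have xA : x \notin A by apply: contra yB; apply: (subsetP b1).
  have : #|x |: A| <= rk (x |: X).
    apply: rk_ge; first by rewrite setUS.
    apply: indep_sub hy; exact: setUS.
  by rewrite cardsU1 xA hx a3 /= ltnn.
- have : #|y |: B| <= rk Y by apply: rk_ge => //; rewrite subUset sub1set yY b2.
  by rewrite cardsU1 yB b4 /= ltnn.
Qed.

Lemma rk_span (X : {set T}) : rk (sp X) = rk X.
Proof.
apply/eqP; rewrite eqn_leq (rk_mono (span_sub _)) andbT.
have [A [a1 a2 a3]] := rk_wit X.
have [B [b1 b2 b3 b4]] := extend a2 (subset_trans a1 (span_sub X)).
rewrite -b4 leqNgt; apply/negP => lt.
have : 0 < #|B :\: A| by rewrite cardsD (setIidPr b1); lia.
move/card_gt0P => [y]; rewrite inE => /andP[yA yB].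
have := subsetP b2 _ yB; rewrite inE => /eqP hy.
have : #|y |: A| <= rk (y |: X).
  apply: rk_ge; first by rewrite setUS.
  apply: indep_sub b3; by rewrite subUset sub1set yB b1.
rewrite cardsU1 yA hy a3; lia.
Qed.

Lemma span_idem (X Y : {set T}) : X \subset sp Y -> sp X \subset sp Y.
Proof.
move=> /span_mono h; apply: subset_trans h _.
apply/subsetP => x; rewrite !inE rk_span => /eqP hx.
rewrite eqn_leq (rk_mono (subsetUr _ _)) andbT -hx rk_mono //.
by rewrite setUS // span_sub.
Qed.

Lemma rk_span_indep (X : {set T}) : indep X -> rk (sp X) = #|X|.
Proof. by move=> h; rewrite rk_span rk_indep. Qed.

Lemma span_eq_card (X Y : {set T}) : indep X -> indep Y -> sp X = sp Y -> #|X| = #|Y|.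
Proof. by move=> hX hY e; rewrite -rk_span_indep // e rk_span_indep. Qed.

Lemma span_K2 (I J : {set T}) : indep I -> I \subset sp J -> #|I| = rk J -> sp I = sp J.
Proof.
move=> hI IJ c; apply/eqP; rewrite eqEsubset span_idem //=.
apply/subsetP => x xJ; apply/negPn/negP => xI.
have h := indep_span hI xI.
have xnI : x \notin I by apply: contra xI; apply: (subsetP (span_sub I)).
have : #|x |: I| <= rk (sp J) by apply: rk_ge => //; rewrite subUset sub1set xJ IJ.
rewrite cardsU1 xnI rk_span c; lia.
Qed.

Lemma factA (X Y Z : {set T}) : indep X -> indep Y -> sp X = sp Y ->
  indep (X :|: Z) -> [disjoint X & Z] ->
  [/\ indep (Y :|: Z), [disjoint Y & Z] & sp (Y :|: Z) = sp (X :|: Z)].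
Proof.
move=> hX hY e hXZ dXZ.
have sym : forall X Y : {set T}, sp X = sp Y -> X :|: Z \subset sp (Y :|: Z).
  move=> X1 Y1 e1; rewrite subUset; apply/andP; split.
    apply: subset_trans (span_sub X1) _; rewrite e1; apply: span_mono; exact: subsetUl.
  apply: subset_trans (span_sub _); exact: subsetUr.
have es : sp (Y :|: Z) = sp (X :|: Z).
  by apply/eqP; rewrite eqEsubset !span_idem // sym.
have cX : #|X| = #|Y| by apply: span_eq_card.
have cXZ : #|X :|: Z| = #|X| + #|Z| by rewrite cardsU (disjoint_setI0 dXZ) cards0 subn0.
have r1 : rk (Y :|: Z) = #|Y| + #|Z| by rewrite -rk_span es rk_span rk_indep // cXZ cX.
have hle := rk_le (Y :|: Z).
have hYZ := cardsUI Y Z.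
have c0 : #|Y :&: Z| = 0.
  lia.
split => //.
- apply: indep_rk. lia.
- by rewrite -setI_eq0 -cards_eq0 c0.
Qed.
End Mat.

Lemma card_bigcup_le (E V : finType) (F : {set E}) (G : E -> {set V}) :
  #|\bigcup_(f in F) G f| <= \sum_(f in F) #|G f|.
Proof.
apply: (big_ind2 (fun (S : {set V}) (m : nat) => #|S| <= m)).
- by rewrite cards0.
- move=> S1 m1 S2 m2 h1 h2; rewrite cardsU; lia.
- by [].
Qed.

Lemma disj_subr (V : finType) (A B C : {set V}) : B \subset C -> [disjoint A & C] -> [disjoint A & B].
Proof.
move=> BC /disjP h; apply/disjP => x xA xB; apply: (h x xA); exact: (subsetP BC).
Qed.

Section Hyp.
Variables (V E T : finType) (edge : E -> {set V}) (gamma : E -> T) (indep : {set T} -> bool).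
Hypothesis hM : is_matroid indep.
Variable r : nat.
Hypothesis hr1 : 1 <= r.
Hypothesis hr : forall e, #|edge e| <= r.
Local Notation D := (edges_minus edge).
Local Notation im M := (gamma @: M).
Local Notation IM := (indep_matching edge gamma indep).
Local Notation sp := (span indep).
Local Notation rk := (mrank indep).

Definition maxin (U : {set V}) (M : {set E}) :=
  [/\ M \subset D U, IM M &
      forall (M2 : {set E}) g, M2 \subset D U -> IM M2 -> sp (im M2) = sp (im M) ->
        g \in D U -> g \notin M2 -> IM (g |: M2) -> False].

Lemma im_card (M : {set E}) : IM M -> #|im M| = #|M|.
Proof. by case => _ h _; rewrite card_in_imset. Qed.

Lemma im_indep (M : {set E}) : IM M -> indep (im M).
Proof. by case. Qed.

Lemma IM_sub (M N : {set E}) : N \subset M -> IM M -> IM N.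
Proof.
move=> NM [h1 h2 h3]; split.
- move=> x y xN yN; apply: h1; exact: (subsetP NM).
- move=> x y xN yN; apply: h2; exact: (subsetP NM).
- apply: (indep_sub hM _ h3); exact: imsetS.
Qed.

Lemma IM_add (M : {set E}) e : IM M -> e \notin M ->
  (forall f, f \in M -> [disjoint edge e & edge f]) -> gamma e \notin im M ->
  indep (gamma e |: im M) -> IM (e |: M).
Proof.
move=> [h1 h2 h3] eM hd ge hi; split.
- move=> x y; rewrite !inE => /orP[/eqP->|xM] /orP[/eqP->|yM] neq.
  + by rewrite eqxx in neq.
  + exact: hd.
  + rewrite disjoint_sym; exact: hd.
  + exact: h1.
- move=> x y; rewrite !inE => /orP[/eqP->|xM] /orP[/eqP->|yM] eq //.
  + case/negP: ge; rewrite eq; exact: imset_f.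
  + case/negP: ge; rewrite -eq; exact: imset_f.
  + exact: h2.
- by rewrite imsetU1.
Qed.

Lemma IM_union (A B : {set E}) : IM A -> IM B ->
  (forall a b, a \in A -> b \in B -> a != b -> [disjoint edge a & edge b]) ->
  indep (im A :|: im B) -> [disjoint im A & im B] -> IM (A :|: B).
Proof.
move=> [a1 a2 a3] [b1 b2 b3] hd hi /disjP dj; split.
- move=> x y; rewrite !inE => /orP[xA|xB] /orP[yA|yB] neq.
  + exact: a1.
  + exact: hd.
  + rewrite disjoint_sym; apply: hd => //; by rewrite eq_sym.
  + exact: b1.
- move=> x y; rewrite !inE => /orP[xA|xB] /orP[yA|yB] eq.
  + exact: a2.
  + exfalso; apply: (dj (gamma x)); [exact: imset_f | rewrite eq; exact: imset_f].
  + exfalso; apply: (dj (gamma y)); [exact: imset_f | rewrite -eq; exact: imset_f].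
  + exact: b2.
- by rewrite imsetU.
Qed.

Lemma IM_notin (M : {set E}) g : IM (g |: M) -> g \notin M -> gamma g \notin im M.
Proof.
case=> _ h2 _ gM; apply/imsetP => [[x xM ex]].
have eg : g = x by apply: h2; rewrite ?inE ?eqxx ?xM ?orbT.
by rewrite eg xM in gM.
Qed.

Lemma D_mono (U U' : {set V}) : U \subset U' -> D U' \subset D U.
Proof.
move=> UU; apply/subsetP => x; rewrite !inE; exact: disj_subr.
Qed.

Lemma gen n : forall (U : {set V}) (M : {set E}), maxin U M -> #|M| = n ->
  exists a, a <= n /\ exists U' : {set V}, #|U'| <= #|U| + (2*r-1)*a /\
   exists M' : {set E}, [/\ M' \subset D U', IM M', #|M'| = n - a &
     forall h, h \in D U' -> gamma h \in sp (im M')].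
Proof.
elim/ltn_ind: n => n IH U M hmax cM.
case: (boolP [exists h in D U, gamma h \notin sp (im M)]) =>
   [/existsP [e0 /andP [e0D e0bad]] | /existsPn hno]; last first.
  exists 0; split => //; exists U; split; first by rewrite muln0 addn0.
  exists M; case: hmax => h1 h2 _; split => //; first by rewrite subn0.
  move=> h hD; have := hno h; by rewrite hD /= negbK.
case: hmax => MD MIM Mmax.
pose P k := exists Ms : {set E}, exists e : E, [/\ Ms \subset D U, IM Ms,
  sp (im Ms) = sp (im M), e \in D U &
  gamma e \notin sp (im M) /\ #|[set f in Ms | ~~ [disjoint edge f & edge e]]| = k].
have exP : exists k, P k by eexists; exists M, e0; split.
have [k [[Ms [e [MsD MsIM Mssp eD [ebad cF]]]] kmin]] := min_ex exP.
set F := [set f in Ms | ~~ [disjoint edge f & edge e]] in cF.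
have FMs : F \subset Ms by apply/subsetP => f; rewrite inE => /andP[].
have cMs : #|Ms| = n.
  rewrite -(im_card MsIM) -cM -(im_card MIM).
  exact: (span_eq_card hM (im_indep MsIM) (im_indep MIM) Mssp).
have ebad' : gamma e \notin sp (im Ms) by rewrite Mssp.
have geMs : gamma e \notin im Ms.
  by apply: contra ebad'; apply: (subsetP (span_sub indep _)).
have eMs : e \notin Ms by apply: contra geMs; exact: imset_f.
have kpos : 0 < k.
  rewrite lt0n; apply/negP => /eqP k0.
  apply: (Mmax Ms e MsD MsIM Mssp eD eMs).
  apply: IM_add => //; last exact: (indep_span hM (im_indep MsIM) ebad').
  move=> f fMs; rewrite disjoint_sym.
  have : f \notin F by rewrite -cF in k0; move/eqP: k0; rewrite cards_eq0 => /eqP ->; rewrite inE.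
  by rewrite inE fMs /= negbK.
have kn : k <= n by rewrite -cF -cMs; exact: subset_leq_card.
pose U1 := U :|: (edge e :|: \bigcup_(f in F) edge f).
pose M1 := Ms :\: F.
have cM1 : #|M1| = n - k by rewrite cardsD (setIidPr FMs) cMs cF.
have UU1 : U \subset U1 by exact: subsetUl.
have eU1 : edge e \subset U1 by apply/subsetP => x xe; rewrite /U1 !inE xe /= orbT.
have FU1 : forall f, f \in F -> edge f \subset U1.
  move=> f fF; apply/subsetP => x xf; rewrite /U1 !inE; apply/orP; right; apply/orP; right.
  by apply/bigcupP; exists f.
have DU1 : forall x, x \in D U1 -> [disjoint edge x & edge e] /\
     (forall f, f \in F -> [disjoint edge x & edge f]).
  move=> x; rewrite inE => hx; split; first exact: disj_subr eU1 hx.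
  move=> f fF; exact: disj_subr (FU1 f fF) hx.
have xF : forall x, x \in D U1 -> x \notin F.
  move=> x /DU1 [h _]; by rewrite inE h andbF.
have DU1U : D U1 \subset D U by exact: D_mono.
have M1max : maxin U1 M1.
  split.
  - apply/subsetP => f; rewrite inE => /andP[fF fMs]; rewrite inE.
    have fDU := subsetP MsD f fMs; rewrite inE in fDU.
    apply/disjP => x xf; rewrite !inE => /orP [xU | /orP [xe | /bigcupP [f' f'F xf']]].
    + by move/disjP: fDU => /(_ x xf xU).
    + by move: fF; rewrite inE fMs /= negbK => /disjP /(_ x xf xe).
    + have nff : f != f' by apply/eqP => eff; rewrite eff f'F in fF.
      case: MsIM => h1 _ _.
      by move/disjP: (h1 f f' fMs (subsetP FMs f' f'F) nff) => /(_ x xf xf').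
  - exact: IM_sub (subsetDl _ _) MsIM.
  move=> M2 g M2D M2IM M2sp gD gM2 gIM.
  have M2DU : M2 \subset D U := subset_trans M2D DU1U.
  have M1F : M1 :|: F = Ms.
    apply/eqP; rewrite eqEsubset subUset subsetDl FMs /=.
    apply/subsetP => x xMs; rewrite in_setU in_setD xMs andbT.
    by case: (x \in F).
  have dM1F : [disjoint im M1 & im F].
    apply/disjP => y /imsetP [a aM1 ->] /imsetP [b bF eab].
    case: MsIM => _ h2 _.
    move: aM1; rewrite inE => /andP [aF aMs].
    have : a = b by apply: h2 => //; exact: (subsetP FMs).
    by move=> eq; rewrite eq bF in aF.
  have hM1F : indep (im M1 :|: im F) by rewrite -imsetU M1F; exact: im_indep MsIM.
  have [hJ dJ spJ] := factA hM (im_indep (IM_sub (subsetDl _ _) MsIM)) (im_indep M2IM)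
       (esym M2sp) hM1F dM1F.
  have M2F_IM : IM (M2 :|: F).
    apply: IM_union M2IM (IM_sub FMs MsIM) _ hJ dJ => a b aM2 bF _.
    exact: (DU1 a (subsetP M2D a aM2)).2 b bF.
  have M2F_D : M2 :|: F \subset D U.
    by rewrite subUset M2DU (subset_trans FMs MsD).
  have spJ' : sp (im (M2 :|: F)) = sp (im M) by rewrite imsetU spJ -imsetU M1F Mssp.
  have gnF : g \notin F := xF g gD.
  have gdisj : forall f, f \in M2 :|: F -> [disjoint edge g & edge f].
    move=> f; rewrite inE => /orP [fM2 | fF].
    + case: gIM => h1 _ _; apply: h1; rewrite ?inE ?eqxx ?fM2 ?orbT //.
      by apply/eqP => egf; rewrite egf fM2 in gM2.
    + exact: (DU1 g gD).2 f fF.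
  have gJ : gamma g \in sp (im (M2 :|: F)).
    apply/negPn/negP => gn.
    apply: (Mmax (M2 :|: F) g M2F_D M2F_IM spJ' (subsetP DU1U g gD)).
    - by rewrite inE negb_or gM2 gnF.
    apply: (IM_add M2F_IM _ gdisj).
    - by rewrite inE negb_or gM2 gnF.
    - by apply: contra gn; apply: (subsetP (span_sub indep _)).
    - exact: (indep_span hM (im_indep M2F_IM) gn).
  set J := im (M2 :|: F).
  set I0 := im (g |: M2).
  have hI0 : indep I0 := im_indep gIM.
  have hJi : indep J := im_indep M2F_IM.
  have M2F0 : #|M2 :&: F| = 0.
    apply/eqP; rewrite cards_eq0; apply/eqP/setP => x; rewrite in_setI in_set0.
    apply/negbTE/negP => /andP [xM2 xF2].
    by move: (xF x (subsetP M2D x xM2)); rewrite xF2.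
  have cJ : #|J| = #|M2| + k.
    by rewrite /J (im_card M2F_IM) -cF cardsU M2F0 subn0.
  have cI0 : #|I0| = #|M2|.+1 by rewrite /I0 (im_card gIM) cardsU1 gM2.
  have I0J : I0 \subset sp J.
    rewrite /I0 imsetU1 subUset sub1set gJ /=.
    apply: subset_trans (span_sub indep J); apply: imsetS; exact: subsetUl.
  have [B [b1 b2 b3 b4]] := extend hM hI0 (subsetUl I0 J).
  have rIJ : rk (I0 :|: J) = #|J|.
    apply/eqP; rewrite eqn_leq; apply/andP; split.
    - rewrite -(rk_span_indep hM hJi); apply: (rk_mono hM).
      by rewrite subUset I0J span_sub.
    - apply: (rk_ge (subsetUr _ _) hJi).
  pose F' := [set f in F | gamma f \in B :\: I0].
  pose N := g |: (M2 :|: F').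
  have F'F : F' \subset F by apply/subsetP => f; rewrite inE => /andP [].
  have imF' : im F' = B :\: I0.
    apply/eqP; rewrite eqEsubset; apply/andP; split.
    - apply/subsetP => y /imsetP [f]; rewrite inE => /andP [_ fB] ->. done.
    - apply/subsetP => y; rewrite inE => /andP [yI0 yB].
      have := subsetP b2 y yB; rewrite inE (negbTE yI0) /= /J imsetU inE.
      case/orP => [yM2 | /imsetP [f fF ey]].
      + by move: yI0; rewrite /I0 imsetU1 inE yM2 orbT.
      + subst y; apply: imset_f; by rewrite inE fF inE yI0 yB.
  have imN : im N = B.
    rewrite /N imsetU1 imsetU setUA -imsetU1 -/I0 imF'.
    apply/setP => x; rewrite !inE; case xI: (x \in I0) => //=.
    by rewrite (subsetP b1 x xI).
  have NIM : IM N.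
    apply: IM_add.
    - exact: IM_sub (setUS M2 F'F) M2F_IM.
    - rewrite inE negb_or gM2 /=; by apply: contra gnF; apply: (subsetP F'F).
    - move=> f; rewrite inE => /orP [fM2|fF']; apply: gdisj; rewrite inE ?fM2 //.
      by rewrite (subsetP F'F f fF') orbT.
    - rewrite imsetU inE negb_or (IM_notin gIM gM2) imF' inE /I0 imsetU1 setU11 //.
    - by rewrite -imsetU1 -/N imN.
  have ND : N \subset D U.
    rewrite /N subUset sub1set (subsetP DU1U g gD) subUset M2DU /=.
    exact: subset_trans F'F (subset_trans FMs MsD).
  have Nsp : sp (im N) = sp (im M).
    rewrite imN -spJ'; apply: (span_K2 hM b3).
    - apply: subset_trans b2 _; by rewrite subUset I0J span_sub.
    - by rewrite b4 rIJ rk_indep.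
  have := kmin #|[set f in N | ~~ [disjoint edge f & edge e]]|.
  have cnt : #|[set f in N | ~~ [disjoint edge f & edge e]]| <= #|F'|.
    apply: subset_leq_card; apply/subsetP => f; rewrite in_set /N in_setU1 in_setU => /andP [/orP [/eqP -> | /orP [fM2|fF']]].
    - by rewrite (DU1 g gD).1.
    - by rewrite (DU1 f (subsetP M2D f fM2)).1.
    - by [].
  have cF' : #|F'| = k.-1.
    have inj : {in F' &, injective gamma}.
      case: MsIM => _ h2 _ x y xF' yF'; apply: h2; apply: (subsetP FMs); exact: (subsetP F'F).
    by rewrite -(card_in_imset inj) imF' cardsD (setIidPr b1) b4 rIJ cJ cI0 subnS addKn.
  move=> h; have hk : k <= k.-1.
    rewrite -cF'; apply: leq_trans (h _) cnt.
    by exists N, e; split.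
  by rewrite leqNgt ltn_predL kpos in hk.
have [|a' [ha' [U' [hU' [M' [M'D M'IM cM' M'span]]]]]] := IH (n - k) _ U1 M1 M1max cM1.
  by rewrite ltn_subrL kpos (leq_trans kpos kn).
have hU1 : #|U1| <= #|U| + (2*r-1)*k.
  set X := \bigcup_(f in F) edge f.
  have h1 : #|U1| <= #|U| + #|edge e :|: X| by rewrite /U1 cardsU leq_subr.
  have h2 : edge e :|: X = edge e :|: \bigcup_(f in F) (edge f :\: edge e).
    apply/setP => x; rewrite !in_setU; case xe: (x \in edge e) => //=.
    apply/bigcupP/bigcupP => [[f fF xf]|[f fF xf]]; exists f => //.
      by rewrite in_setD xe xf.
    by move: xf; rewrite in_setD => /andP [].
  have h3 := card_bigcup_le F (fun f => edge f :\: edge e).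
  have h4 : \sum_(f in F) #|edge f :\: edge e| <= \sum_(f in F) (r - 1).
    apply: leq_sum => f fF; rewrite cardsD.
    have : 0 < #|edge f :&: edge e|.
      rewrite card_gt0 setI_eq0; by move: fF; rewrite inE => /andP [].
    move: (hr f) => hf h0; clear -hf h0; lia.
  rewrite sum_nat_const cF in h4.
  have h5 : #|edge e :|: X| <= r + k * (r - 1).
    rewrite h2; apply: leq_trans (leq_card_setU _ _).1 _.
    move: (hr e) => he; clear -he h3 h4; lia.
  have h6 : r + k * (r - 1) <= (2 * r - 1) * k by clear -kpos hr1; nia.
  clear -h1 h5 h6; lia.
exists (k + a'); split; first by clear -ha' kn; lia.
exists U'; split; first by rewrite mulnDr; clear -hU' hU1; lia.
exists M'; split => //; by rewrite cM' subnDA.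
Qed.
End Hyp.

Theorem mainTheorem6
  (r : nat) (V E T : finType) (edge : E -> {set V}) (gamma : E -> T)
  (indep : {set T} -> bool) (l : nat) :
  1 <= r ->
  (forall e, edge e != set0) ->
  (forall e, #|edge e| <= r) ->
  is_matroid indep ->
  (exists M : {set E}, maximal_matching edge gamma indep M /\ #|M| = l) ->
  exists a : nat, a <= l /\
    exists U : {set V}, #|U| <= (2 * r - 1) * a /\
      exists M' : {set E},
        [/\ indep_matching_in edge gamma indep U M', #|M'| = l - a &
            basis_of indep (span indep (gamma @: edges_minus edge U)) (gamma @: M')].
Proof.
move=> hr1 _ hr hM [M [[MIM Mnot] cM]].
have hmax : maxin edge gamma indep set0 M.
  split => //.
  - apply/subsetP => x _; rewrite inE; apply/disjP => y _; by rewrite inE.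
  - move=> M2 g _ M2IM M2sp _ gM2 gIM; apply: Mnot; exists M2; split => //.
    case => _; apply; exists (g |: M2); split => //.
    rewrite properE subsetUr /=; apply/negP => /subsetP /(_ g).
    rewrite !inE eqxx /= => /(_ isT) gM2'. by rewrite gM2' in gM2.
have [a [ha [U' [hU' [M' [M'D M'IM cM' M'span]]]]]] := gen hM hr1 hr hmax cM.
exists a; split => //; exists U'; split; first by rewrite cards0 add0n in hU'.
exists M'; split => //.
split.
- apply: subset_trans (span_sub indep _); exact: imsetS.
- exact: im_indep M'IM.
- move=> B' h1 h2 h3.
  have hs : span indep (gamma @: edges_minus edge U') \subset span indep (gamma @: M').
    apply: (span_idem hM); apply/subsetP => y /imsetP [h hD ->]; exact: M'span.
  apply/eqP; rewrite eq_sym eqEcard h1 /=.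
  rewrite -(rk_span_indep hM (im_indep M'IM)); apply: rk_ge h3.
  exact: subset_trans h2 hs.
Qed.
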